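(* Let $p$ be a prime number of the form $p = 9a^2 + 4b^2$ with integers $a, b$. Then the equation $p x^4 - 36 y^4 = z^2$ has no rational solutions $(x,y,z)$ other than the trivial solution $x=y=z=0$. *)

(* Defs.v *)
From mathcomp Require Import all_boot all_order all_algebra.

(* Main.v *)
Require Import Defs.
From mathcomp Require Import all_boot all_order all_algebra.
From mathcomp Require Import zify ring lra.
Import GRing.Theory Num.Theory.
Local Open Scope ring_scope.

Lemma reduce (m0 n0 : int) : (m0 != 0) || (n0 != 0) ->
  exists g m n : int, [/\ g != 0, m0 = m * g, n0 = n * g & coprimez m n].
Proof.
move=> nz.
have g0 : gcdz m0 n0 != 0.
  by rewrite gcdz_eq0 negb_and.
have gpos : 0 <= gcdz m0 n0 by [].
exists (gcdz m0 n0), (m0 %/ gcdz m0 n0)%Z, (n0 %/ gcdz m0 n0)%Z.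
split.
- by [].
- by rewrite divzK // dvdz_gcdl.
- by rewrite divzK // dvdz_gcdr.
- have := mulz_gcdl (m0 %/ gcdz m0 n0)%Z (n0 %/ gcdz m0 n0)%Z (gcdz m0 n0).
  rewrite !divzK ?dvdz_gcdl ?dvdz_gcdr // gez0_abs // => h.
  rewrite /coprimez; apply/eqP; move: h g0 gpos; set G := gcdz m0 n0; set H := gcdz _ _.
  move=> h g0 gp; nia.
Qed.

Lemma cop_dvd (q m n : int) : coprimez m n -> (q %| m)%Z -> (q %| n)%Z -> (q %| 1)%Z.
Proof.
move=> /eqP c h1 h2; have : (q %| gcdz m n)%Z by rewrite dvdz_gcd h1 h2.
by rewrite c.
Qed.

Lemma mod3 (m : int) : (3 %| m)%Z \/ exists t, m ^+ 2 = 3 * t + 1.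
Proof.
have [t [->|[->|->]]] : exists t, m = 3 * t \/ m = 3 * t + 1 \/ m = 3 * t + 2.
  exists (m %/ 3)%Z; lia.
- left; lia.
- right; exists (3 * t ^+ 2 + 2 * t); ring.
- right; exists (3 * t ^+ 2 + 4 * t + 1); ring.
Qed.

Lemma mod2 (m : int) : exists t, m = 2 * t \/ m = 2 * t + 1.
Proof. exists (m %/ 2)%Z; lia. Qed.

Lemma oddsq (m : int) : ~ (2 %| m)%Z -> exists t, m ^+ 2 = 8 * t + 1.
Proof.
move=> h; have [t [e|e]] := mod2 m; first by exfalso; apply: h; lia.
have [s [e'|e']] := mod2 t; subst.
- exists (2 * s ^+ 2 + s); ring.
- exists (2 * s ^+ 2 + 3 * s + 1); ring.
Qed.

Lemma sq16 (m : int) : (exists t, m ^+ 2 = 16 * t) \/ (exists t, m ^+ 2 = 16 * t + 4) \/ (exists t, m ^+ 2 = 8 * t + 1).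
Proof.
have [t [e|e]] := mod2 m.
- have [s [e'|e']] := mod2 t; subst.
  + left; exists (s ^+ 2); ring.
  + right; left; exists (s ^+ 2 + s); ring.
- right; right; apply: oddsq; lia.
Qed.

Lemma euclidz (q : nat) (x y : int) : prime q -> (q%:Z %| x * y)%Z ->
  (q%:Z %| x)%Z \/ (q%:Z %| y)%Z.
Proof.
move=> pq; rewrite !dvdzE abszM absz_nat Euclid_dvdM //.
by case/orP; [left|right].
Qed.

Lemma prime_dvd_nat (q p : nat) : prime q -> prime p -> (q%:Z %| p%:Z)%Z -> q = p.
Proof. by move=> pq pp; rewrite dvdzE !absz_nat dvdn_prime2 // => /eqP. Qed.

Lemma cop3 (X : int) : ~ (3 %| X)%Z -> coprimez X 3.
Proof.
move=> h; rewrite coprimezE coprime_sym prime_coprime //.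
by apply/negP=> h'; apply: h; rewrite dvdzE.
Qed.

Lemma powmod3 (p : int) t (e : nat) : p = 3 * t + 1 -> exists j, p ^+ e = 3 * j + 1.
Proof.
move=> ->; elim: e => [|e [j ih]]; first by exists 0; rewrite expr0; lia.
exists (3 * j * t + j + t); rewrite exprS ih; ring.
Qed.

Lemma param (a b U V P : int) :
  P ^+ 2 = (9 * a ^+ 2 + 4 * b ^+ 2) * (U ^+ 2 + V ^+ 2) ->
  exists m n : int, [/\ coprimez m n, (m != 0) || (n != 0),
    P * (m ^+ 2 - n ^+ 2) = (m ^+ 2 + n ^+ 2) * (3 * a * U + 2 * b * V) &
    P * (2 * m * n) = (m ^+ 2 + n ^+ 2) * (3 * a * V - 2 * b * U)].
Proof.
move=> h.
set u := 3 * a * U + 2 * b * V; set v := 3 * a * V - 2 * b * U.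
have huv : u ^+ 2 + v ^+ 2 = P ^+ 2 by rewrite h /u /v; ring.
have e1 : P * ((P + u) ^+ 2 - v ^+ 2) - ((P + u) ^+ 2 + v ^+ 2) * u = 0.
  have -> : P * ((P + u) ^+ 2 - v ^+ 2) - ((P + u) ^+ 2 + v ^+ 2) * u
     = (P + u) * (P ^+ 2 - (u ^+ 2 + v ^+ 2)) by ring.
  by rewrite huv subrr mulr0.
have e2 : P * (2 * (P + u) * v) - ((P + u) ^+ 2 + v ^+ 2) * v = 0.
  have -> : P * (2 * (P + u) * v) - ((P + u) ^+ 2 + v ^+ 2) * v
     = v * (P ^+ 2 - (u ^+ 2 + v ^+ 2)) by ring.
  by rewrite huv subrr mulr0.
have [/andP [/eqP m0 /eqP n0]|nz] := boolP ((P + u == 0) && (v == 0)).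
  exists 0, 1; split => //.
  - rewrite expr0n /= expr1n; lia.
  - rewrite n0 expr0n /= expr1n; lia.
rewrite negb_and in nz.
have [g [m [n [g0 em en cmn]]]] := reduce _ _ nz.
exists m, n; split => //.
- by apply: contraNT g0; rewrite negb_or !negbK => /andP [/eqP m0' /eqP n0'];
     move: nz; rewrite em en m0' n0' !mul0r eqxx.
- apply/eqP; rewrite -subr_eq0.
  have : (P * (m ^+ 2 - n ^+ 2) - (m ^+ 2 + n ^+ 2) * u) * g ^+ 2 = 0.
    by rewrite -e1 em en; ring.
  by move/eqP; rewrite mulf_eq0 expf_eq0 (negbTE g0) andbF orbF.
- apply/eqP; rewrite -subr_eq0.
  have : (P * (2 * m * n) - (m ^+ 2 + n ^+ 2) * v) * g ^+ 2 = 0.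
    by rewrite -e2 em en; ring.
  by move/eqP; rewrite mulf_eq0 expf_eq0 (negbTE g0) andbF orbF.
Qed.

Lemma final (p : nat) (a b m n k X Y Z D L1 L2 tp : int) :
  prime p -> p%:Z = 9 * a ^+ 2 + 4 * b ^+ 2 -> p%:Z = 3 * tp + 1 ->
  ~ (2 %| a)%Z -> ~ (3 %| b)%Z -> ~ (3 %| X)%Z -> coprimez m n ->
  D = m ^+ 2 + n ^+ 2 ->
  L1 = 3 * a * m * n + b * (m ^+ 2 - n ^+ 2) ->
  L2 = 3 * a * (m ^+ 2 - n ^+ 2) - 4 * b * m * n ->
  D = k * X ^+ 2 -> L1 = 3 * Y ^+ 2 * k -> L2 = Z * k -> 0 < k -> False.
Proof.
move=> pp hp hp3 ha2 hb3 hX3 cmn eD eL1 eL2 ek G1 G2 kpos.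
have pr3 : prime 3 by [].
have pr2 : prime 2 by [].
have hk2 : ~ (2 %| k)%Z.
  case/dvdzP=> k' ek'; subst k.
  have [c [ea|ea]] := mod2 a; first by apply: ha2; rewrite ea; clear; lia.
  have [r [er|er]] := mod2 m; have [s [es|es]] := mod2 n.
  - by have := cop_dvd 2 _ _ cmn; rewrite er es; clear; lia.
  - by move: ek; rewrite eD er es; clear; lia.
  - by move: ek; rewrite eD er es; clear; lia.
  - by move: G1; rewrite eL1 er es ea; clear; lia.
have hq : forall q, prime q -> (q %| `|k|)%N -> q = p.
  move=> q pq qk.
  have qk' : (q%:Z %| k)%Z by rewrite dvdzE absz_nat.
  case/dvdzP: (qk') => k'' ek''.
  have h2pm : (q%:Z %| (2 * p%:Z) * (m * m))%Z.
    apply/dvdzP; exists (3 * a * Z * k'' + 12 * b * Y ^+ 2 * k'' + p%:Z * k'' * X ^+ 2).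
    have e : 2 * p%:Z * (m * m) = 3 * a * L2 + 4 * b * L1 + p%:Z * D.
      by rewrite eL1 eL2 eD hp; ring.
    by rewrite e G1 G2 ek ek''; ring.
  case: (euclidz _ _ _ pq h2pm) => [h|h].
    case: (euclidz _ _ _ pq h) => [h'|h'].
      have q2 := prime_dvd_nat q 2 pq pr2 h'; exfalso; apply: hk2.
      by rewrite ek'' q2; apply: dvdz_mull.
    exact: prime_dvd_nat q p pq pp h'.
  have qm : (q%:Z %| m)%Z by case: (euclidz _ _ _ pq h).
  case/dvdzP: (qm) => m' em.
  have qn2 : (q%:Z %| n * n)%Z.
    apply/dvdzP; exists (k'' * X ^+ 2 - m' * m' * q%:Z).
    have e : n * n = D - m * m by rewrite eD; ring.
    by rewrite e ek ek'' em; ring.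
  have qn : (q%:Z %| n)%Z by case: (euclidz _ _ _ pq qn2).
  have := cop_dvd _ _ _ cmn qm qn; rewrite dvdz1 absz_nat => /eqP q1.
  by move: pq; rewrite q1.
have kp : p.-nat `|k|%N.
  apply/pnatP; first by rewrite absz_gt0; clear -kpos; lia.
  by move=> q pq qk; rewrite inE (hq q pq qk).
have ke : k = (p%:Z) ^+ (logn p `|k|).
  rewrite -natz -natrX natz -p_part part_pnat_id //.
  by rewrite gtz0_abs.
have [j ej] := powmod3 (p%:Z) tp (logn p `|k|) hp3.
rewrite -ke in ej.
have [s hs] : exists s, X ^+ 2 = 3 * s + 1 by case: (mod3 X).
have h3 : (3 %| b * (m ^+ 2 - n ^+ 2))%Z.
  apply/dvdzP; exists (Y ^+ 2 * k - a * m * n).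
  have e : b * (m ^+ 2 - n ^+ 2) = L1 - 3 * a * m * n by rewrite eL1; ring.
  by rewrite e G1; ring.
case: (euclidz 3 _ _ pr3 h3) => // h3'.
case: (mod3 m) => [/dvdzP [m' em]|[t1 ht1]]; case: (mod3 n) => [/dvdzP [n' en]|[t2 ht2]].
- by have := cop_dvd 3 _ _ cmn; rewrite em en; clear; lia.
- have e : m ^+ 2 = 9 * m' ^+ 2 by rewrite em; ring.
  by move: h3'; rewrite e ht2; clear; lia.
- have e : n ^+ 2 = 9 * n' ^+ 2 by rewrite en; ring.
  by move: h3'; rewrite e ht1; clear; lia.
- by move: ek; rewrite eD ht1 ht2 ej hs; clear; lia.
Qed.

Lemma main_int (p : nat) (a b X Y Z : int) : prime p ->
  p%:Z = 9 * a ^+ 2 + 4 * b ^+ 2 -> coprimez X Y ->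
  p%:Z * X ^+ 4 - 36 * Y ^+ 4 = Z ^+ 2 -> False.
Proof.
move=> pp hp cXY eq.
have pr3 : prime 3 by [].
have pr2 : prime 2 by [].
have hb3 : ~ (3 %| b)%Z.
  move/dvdzP=> [b' eb]; subst b.
  have : (3%:Z %| p%:Z)%Z by rewrite hp; lia.
  move/(prime_dvd_nat _ _ pr3 pp)=> e3; rewrite -e3 in hp; lia.
have ha2 : ~ (2 %| a)%Z.
  move/dvdzP=> [a' ea]; subst a.
  have : (2%:Z %| p%:Z)%Z by rewrite hp; lia.
  move/(prime_dvd_nat _ _ pr2 pp)=> e2; rewrite -e2 in hp; lia.
have [tp hp3] : exists t, p%:Z = 3 * t + 1.
  case: (mod3 b) => // [[t ht]]; exists (3 * a ^+ 2 + 4 * t + 1); lia.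
have hX2 : ~ (2 %| X)%Z.
  move=> h2; have hY2 : ~ (2 %| Y)%Z.
    by move=> h; have := cop_dvd _ _ _ cXY h2 h; lia.
  case/dvdzP: h2 => X' eX; subst X.
  have [s hs] := oddsq Y hY2.
  have eq' : 16 * (p%:Z * X' ^+ 4) - 36 * (64 * s ^+ 2 + 16 * s + 1) = Z ^+ 2.
    by rewrite -eq -[Y ^+ 4]/(Y ^+ (2 * 2)) exprM hs; ring.
  move: eq'; generalize (p%:Z * X' ^+ 4) (s ^+ 2) => A S.
  case: (sq16 Z) => [[t ht]|[[t ht]|[t ht]]]; rewrite ht; lia.
have hX3 : ~ (3 %| X)%Z.
  move=> h3; have hY3 : ~ (3 %| Y)%Z.
    by move=> h; have := cop_dvd _ _ _ cXY h3 h; lia.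
  case/dvdzP: h3 => X' eX; subst X.
  case: (mod3 Y) => // [[s hs]].
  have eq' : 81 * (p%:Z * X' ^+ 4) - 36 * (9 * s ^+ 2 + 6 * s + 1) = Z ^+ 2.
    by rewrite -eq -[Y ^+ 4]/(Y ^+ (2 * 2)) exprM hs; ring.
  move: eq'; generalize (p%:Z * X' ^+ 4) (s ^+ 2) => A S.
  case: (mod3 Z) => [/dvdzP [w ew]|[t ht]]; last by rewrite ht; lia.
  subst Z.
  case: (mod3 w) => [/dvdzP [v ev]|[t ht]].
    subst w; rewrite (_ : (v * 3 * 3) ^+ 2 = 81 * v ^+ 2); last by ring.
    lia.
  rewrite (_ : (w * 3) ^+ 2 = 9 * w ^+ 2); last by ring.
  rewrite ht; lia.
have X0 : X != 0 by apply/eqP=> e; apply: hX2; rewrite e.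
have eqX : p%:Z * X ^+ 4 = Z ^+ 2 + 36 * Y ^+ 4 by lia.
have hP : (p%:Z * X ^+ 2) ^+ 2 = (9 * a ^+ 2 + 4 * b ^+ 2) * (Z ^+ 2 + (6 * Y ^+ 2) ^+ 2).
  rewrite -hp; transitivity (p%:Z * (p%:Z * X ^+ 4)); first by ring.
  by rewrite eqX; ring.
have [m [n [cmn nz E1 E2]]] := param _ _ _ _ _ hP.
have [D eD] : exists D, D = m ^+ 2 + n ^+ 2 by exists (m ^+ 2 + n ^+ 2).
have [L1 eL1] : exists L, L = 3 * a * m * n + b * (m ^+ 2 - n ^+ 2) by eexists.
have [L2 eL2] : exists L, L = 3 * a * (m ^+ 2 - n ^+ 2) - 4 * b * m * n by eexists.
rewrite -eD in E1 E2.
have p0 : 9 * a ^+ 2 + 4 * b ^+ 2 != 0 by rewrite -hp eqz_nat -lt0n prime_gt0.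
rewrite hp in E1 E2.
have F1 : X ^+ 2 * L1 = 3 * Y ^+ 2 * D.
  apply/eqP; rewrite -subr_eq0; apply/eqP.
  have : (9 * a ^+ 2 + 4 * b ^+ 2) * (2 * (X ^+ 2 * L1 - 3 * Y ^+ 2 * D)) = 0.
    have -> : (9 * a ^+ 2 + 4 * b ^+ 2) * (2 * (X ^+ 2 * L1 - 3 * Y ^+ 2 * D))
      = 3 * a * ((9 * a ^+ 2 + 4 * b ^+ 2) * X ^+ 2 * (2 * m * n) - D * (3 * a * (6 * Y ^+ 2) - 2 * b * Z))
      + 2 * b * ((9 * a ^+ 2 + 4 * b ^+ 2) * X ^+ 2 * (m ^+ 2 - n ^+ 2) - D * (3 * a * Z + 2 * b * (6 * Y ^+ 2))).
      by rewrite eL1; ring.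
    by rewrite E1 E2 !subrr !mulr0 addr0.
  move/eqP; rewrite mulf_eq0 (negbTE p0) /= mulf_eq0 /= => /eqP; done.
have F2 : X ^+ 2 * L2 = Z * D.
  apply/eqP; rewrite -subr_eq0; apply/eqP.
  have : (9 * a ^+ 2 + 4 * b ^+ 2) * (X ^+ 2 * L2 - Z * D) = 0.
    have -> : (9 * a ^+ 2 + 4 * b ^+ 2) * (X ^+ 2 * L2 - Z * D)
      = 3 * a * ((9 * a ^+ 2 + 4 * b ^+ 2) * X ^+ 2 * (m ^+ 2 - n ^+ 2) - D * (3 * a * Z + 2 * b * (6 * Y ^+ 2)))
      - 2 * b * ((9 * a ^+ 2 + 4 * b ^+ 2) * X ^+ 2 * (2 * m * n) - D * (3 * a * (6 * Y ^+ 2) - 2 * b * Z)).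
      by rewrite eL2; ring.
    by rewrite E1 E2 !subrr !mulr0 subr0.
  by move/eqP; rewrite mulf_eq0 (negbTE p0) /= => /eqP.
have cX : coprimez (X ^+ 2) (3 * Y ^+ 2).
  rewrite coprimezMr coprimezXl ?coprimezXr ?coprimez_pexpl //.
  by rewrite cop3.
have [k ek] : exists k, D = k * X ^+ 2.
  apply/dvdzP; rewrite -(Gauss_dvdzr _ cX) -F1; exact: dvdz_mulr.
have X20 : X ^+ 2 != 0 by rewrite expf_eq0.
have G1 : L1 = 3 * Y ^+ 2 * k.
  by apply: (mulIf X20); rewrite mulrC F1 ek; ring.
have G2 : L2 = Z * k.
  by apply: (mulIf X20); rewrite mulrC F2 ek; ring.
have Dpos : 0 < D.
  by rewrite eD; clear -nz; case/orP: nz => h; nia.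
have kpos : 0 < k.
  by have := sqr_ge0 X; clear -Dpos ek; nia.
have fin := (final _ _ _ _ _ _ _ _ _ _ _ _ _ pp hp hp3 ha2 hb3 hX3 cmn eD eL1 eL2 ek G1 G2 kpos).
exact fin.
Qed.

Theorem proposition2 (p : nat) (a b : int) :
  prime p ->
  (p%:Z = 9 * a ^+ 2 + 4 * b ^+ 2) ->
  forall x y z : rat,
    (p%:R * x ^+ 4 - 36 * y ^+ 4 = z ^+ 2) ->
    x = 0 /\ y = 0 /\ z = 0.
Proof.
move=> pp hp x y z e.
have [x0|x0] := eqVneq x 0.
  subst x; split => //; move: e; rewrite expr0n /= mulr0 sub0r => e.
  have : z ^+ 2 + 36 * (y ^+ 2) ^+ 2 == 0.
    by rewrite -e -exprM /=; apply/eqP; ring.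
  rewrite paddr_eq0; last 2 first.
  - exact: sqr_ge0.
  - by rewrite mulr_ge0 // sqr_ge0.
  case/andP=> hz hy; split; last by move: hz; rewrite mulf_eq0 orbb => /eqP.
  move: hy; rewrite mulf_eq0 pnatr_eq0 /= expf_eq0 /= expf_eq0 /=.
  by move/eqP.
exfalso.
have [X eXd] : exists X, X = numq x * (denq y * denq z) by eexists.
have [Y eYd] : exists Y, Y = numq y * (denq x * denq z) by eexists.
have [Zi eZd] : exists Z, Z = numq z * (denq x * denq y) ^+ 2 * denq z by eexists.
have [N eN] : exists N : rat, N = (denq x)%:~R * (denq y)%:~R * (denq z)%:~R by eexists.
have N0 : N != 0 by rewrite eN !mulf_neq0 // intr_eq0 denq_neq0.
have hX : (X%:~R : rat) = x * N by rewrite eXd eN !intrM numqE; ring.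
have hY : (Y%:~R : rat) = y * N by rewrite eYd eN !intrM numqE; ring.
have hZ : (Zi%:~R : rat) = z * N ^+ 2.
  by rewrite eZd eN intrM intrM rmorphXn /= intrM numqE; ring.
have eqi : p%:Z * X ^+ 4 - 36 * Y ^+ 4 = Zi ^+ 2.
  apply: (@intr_inj rat).
  have c4 : forall w : int, ((w ^+ 4)%:~R : rat) = (w%:~R) ^+ 4 by move=> w; rewrite rmorphXn.
  have c2 : forall w : int, ((w ^+ 2)%:~R : rat) = (w%:~R) ^+ 2 by move=> w; rewrite rmorphXn.
  rewrite intrB intrM c4 intrM c4 c2 hX hY hZ.
  have -> : ((p%:Z)%:~R : rat) = p%:R by [].
  have -> : ((36 : int)%:~R : rat) = 36 by [].
  transitivity ((p%:R * x ^+ 4 - 36 * y ^+ 4) * N ^+ 4); first by ring.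
  by rewrite e; ring.
have X0 : X != 0.
  by rewrite -(intr_eq0 rat) hX mulf_neq0.
have [g [X1 [Y1 [g0 eX eY cXY]]]] := reduce X Y (introT orP (or_introl X0)).
have eg : g ^+ 4 * (p%:Z * X1 ^+ 4 - 36 * Y1 ^+ 4) = Zi ^+ 2.
  by rewrite -eqi eX eY; ring.
have : ((g ^+ 2) ^+ 2 %| Zi ^+ 2)%Z.
  by rewrite -eg -exprM /=; apply: dvdz_mulr.
rewrite dvdz_pexp2r // => /dvdzP [W eW].
apply: (main_int p a b X1 Y1 W pp hp cXY).
have g40 : g ^+ 4 != 0 by rewrite expf_eq0.
apply: (mulfI g40); rewrite eg eW; ring.
Qed.
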